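(* Let $d,r$ be positive integers with $d\le q$ and $r\le\binom{m+d}{d}$. If $r<\binom{m+d}{d}$, let $i,j$ be the unique integers with $r=j+\sum_{a=1}^{i}\binom{m+d-a}{d-1}$, $0\le i\le m$ and $0\le j<\binom{m+d-i-1}{d-1}$; if $r=\binom{m+d}{d}$, let $i=m$ and $j=1$. Then $$e_r(d,m)\ge H_j(d-1,m-i)+\mathsf{p}_{m-i-1}.$$
   Context: Let $q$ be a prime power, $\mathbb{F}_q$ the finite field with $q$ elements, $m$ a positive integer. For $j\in\mathbb{Z}$, $\mathsf{p}_j=q^j+\dots+q+1$ if $j\ge0$ and $\mathsf{p}_j=0$ if $j<0$. $e_r(d,m)$ is the maximum, over all families of $r$ linearly independent homogeneous polynomials $F_1,\dots,F_r$ of degree $d$ in $\mathbb{F}_q[x_0,\dots,x_m]$, of the number of points of $\mathbb{P}^m(\mathbb{F}_q)$ at which all $F_i$ vanish. For nonnegative integers $d,n$ and $1\le s\le\binom{n+d}{n}$ (with $n\ge1$, $d\ge 1$, $d<q$): $H_s(d,n)=\sum_{k=1}^{n}\alpha_kq^{n-k}$, where $(\alpha_1,\dots,\alpha_n)$ is the $s$-th element, in descending lexicographic order, of the set of $n$-tuples of integers $(\beta_1,\dots,\beta_n)$ with $0\le\beta_k<q$ and $\beta_1+\dots+\beta_n\le d$. Conventions: $H_0(d,n)=q^n$ for all $d,n\ge0$, and $H_1(d,n)=0$ if $d=0$ or $n=0$. *)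

(* Defs.v *)
From HB Require Import structures.
From mathcomp Require Import all_boot all_order all_algebra all_field.
From mathcomp Require Import mpoly.
From Stdlib Require Import ClassicalEpsilon.

Set Implicit Arguments.
Unset Strict Implicit.
Unset Printing Implicit Defensive.

Import Order.TTheory GRing.Theory.
Local Open Scope ring_scope.

Section Defs.
Variable F : finFieldType.

Definition qF : nat := #|F|.

Definition pq (j : int) : nat :=
  match j with
  | Posz n => (\sum_(0 <= t < n.+1) qF ^ t)%N
  | Negz _ => 0%N
  end.

(* Points of P^m(F_q), represented by the vectors of F^(m+1) whose first
   nonzero coordinate equals 1 (one representative per projective point). *)
Definition normalized (m : nat) (x : {ffun 'I_m.+1 -> F}) : bool :=
  [exists k : 'I_m.+1,
     (x k == 1) && [forall l : 'I_m.+1, (l < k)%N ==> (x l == 0)]].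

Definition nzeros (m r : nat) (P : 'I_r -> {mpoly F[m.+1]}) : nat :=
  #|[set x : {ffun 'I_m.+1 -> F} |
       normalized x && [forall i : 'I_r, (P i).@[x] == 0]]|.

Definition lin_indep (m r : nat) (P : 'I_r -> {mpoly F[m.+1]}) : Prop :=
  forall c : 'I_r -> F, \sum_(i < r) c i *: P i = 0 -> forall i, c i = 0.

Definition admissible (r d m : nat) (P : 'I_r -> {mpoly F[m.+1]}) : Prop :=
  (forall i, P i \is d.-homog) /\ lin_indep P.

Definition pdec (P : Prop) : bool :=
  if excluded_middle_informative P then true else false.

(* e_r(d,m): the maximum of nzeros over admissible families (the number of
   zeros is bounded by the number of vectors of F^(m+1)). *)
Definition e_rdm (r d m : nat) : nat :=
  (\max_(n < #|{ffun 'I_m.+1 -> F}|.+1 |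
      pdec (exists P : 'I_r -> {mpoly F[m.+1]}, admissible d P /\ nzeros P = n))
     (n : nat))%N.

End Defs.

Fixpoint lexge (s t : seq nat) : bool :=
  match s, t with
  | [::], _ => true
  | _ :: _, [::] => true
  | a :: s', b :: t' => (b < a)%N || ((a == b) && lexge s' t')
  end.

Fixpoint tuples (q n d : nat) : seq (seq nat) :=
  match n with
  | 0 => [:: [::]]
  | n'.+1 => flatten [seq [seq b :: t | t <- tuples q n' (d - b)]
                     | b <- iota 0 (minn q d.+1)]
  end.

Definition Hs (q s d n : nat) : nat :=
  if s is s'.+1 then
    let alpha := nth [::] (sort lexge (tuples q n d)) s' in
    (\sum_(k < n) nth 0 alpha k * q ^ (n - k.+1))%N
  else (q ^ n)%N.

(* Main.v *)
Require Import Defs.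
From HB Require Import structures.
From mathcomp Require Import all_boot all_order all_algebra all_field.
From mathcomp Require Import mpoly.
From mathcomp Require Import zify.
From Stdlib Require Import ClassicalEpsilon.

Set Implicit Arguments.
Unset Strict Implicit.
Unset Printing Implicit Defensive.

Lemma lexge_total : total lexge.
Proof.
elim=> [|a s IH] [|b t] //=.
case: (ltngtP a b) => //= ->; rewrite eqxx /=; exact: IH.
Qed.

Lemma lexge_refl s : lexge s s.
Proof. by elim: s => //= a s ->; rewrite eqxx ltnn. Qed.

Lemma lexge_trans_sz x y z : size x = size y -> size y = size z ->
  lexge x y -> lexge y z -> lexge x z.
Proof.
elim: x y z => [|a x IH] [|b y] [|c z] //= [Hxy] [Hyz].
case/orP=> [ba|/andP[/eqP ab Hxy']]; case/orP=> [cb|/andP[/eqP bc Hyz']].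
- by rewrite (ltn_trans cb ba).
- by rewrite -bc ba.
- by rewrite ab cb.
- by rewrite ab bc eqxx (IH y z) // orbT.
Qed.

Lemma tuples_mem q n e t : t \in tuples q n e ->
  [/\ size t = n, all (fun b => b < q) t & sumn t <= e].
Proof.
elim: n e t => [|n IH] e t /=; first by rewrite inE => /eqP ->.
case/flatten_mapP=> b; rewrite mem_iota leq_min /= => /andP[bq be].
case/mapP=> u /IH [su au se] ->; split => //=; first by rewrite su.
  by rewrite bq.
lia.
Qed.

Lemma uniq_flatten_map (S T : eqType) (f : S -> seq T) (s : seq S) :
  uniq s -> (forall x, x \in s -> uniq (f x)) ->
  (forall x y z, x \in s -> y \in s -> z \in f x -> z \in f y -> x = y) ->
  uniq (flatten (map f s)).
Proof.
elim: s => //= x s IH /andP[xs us] uf dj.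
rewrite cat_uniq uf ?mem_head //= IH //; last first.
- by move=> y1 y2 z y1s y2s; apply: dj; rewrite inE ?y1s ?y2s orbT.
- by move=> y ys; apply: uf; rewrite inE ys orbT.
rewrite andbT; apply/hasP => -[z /flatten_mapP[y ys zy] zx].
have exy := dj x y z (mem_head _ _) _ zx zy.
by move: xs; rewrite exy ?ys // inE ys orbT.
Qed.

Lemma tuples_uniq q n e : uniq (tuples q n e).
Proof.
elim: n e => [|n IH] e //=.
apply: uniq_flatten_map; first exact: iota_uniq.
  by move=> b _; rewrite map_inj_uniq // => u v [].
by move=> b c z _ _ /mapP[u _ ->] /mapP[v _ []].
Qed.

Lemma hockey n e :
  (\sum_(b < e.+1) 'C(n + (e - b), e - b))%N = 'C(n.+1 + e, e).
Proof.
elim: e => [|e IH]; first by rewrite big_ord1 !bin0.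
rewrite big_ord_recl /= subn0.
have -> : \sum_(i < e.+1) 'C(n + (e.+1 - bump 0 i), e.+1 - bump 0 i)
   = \sum_(b < e.+1) 'C(n + (e - b), e - b).
  by apply: eq_bigr => b _; rewrite /bump /= add1n subSS.
by rewrite IH !addSn binS !addnS.
Qed.

Lemma size_tuples q n e : e < q -> size (tuples q n e) = 'C(n + e, e).
Proof.
elim: n e => [|n IH] e eq /=; first by rewrite binn.
rewrite size_flatten /shape -map_comp.
have -> : minn q e.+1 = e.+1 by lia.
rewrite sumnE big_map.
have -> : iota 0 e.+1 = index_iota 0 e.+1 by rewrite /index_iota subn0.
rewrite big_mkord.
rewrite -hockey; apply: eq_bigr => b _ /=.
rewrite size_map IH //; lia.
Qed.
Import GRing.Theory.
Local Open Scope ring_scope.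

Section Points.
Variable F : finFieldType.
Local Notation E := (enum F).
Local Notation q := #|F|.

Fixpoint allv (n : nat) : seq (seq F) :=
  if n is n'.+1 then [seq x :: v | x <- E, v <- allv n'] else [:: [::]].

Fixpoint lexless (al : seq nat) : seq (seq F) :=
  if al is a0 :: al' then
    [seq x :: v | x <- take a0 E, v <- allv (size al')] ++
    [seq nth 0 E a0 :: v | v <- lexless al']
  else [::].

Fixpoint proj (n : nat) : seq (seq F) :=
  if n is n'.+1 then [seq 1 :: v | v <- allv n'] ++ [seq 0 :: v | v <- proj n']
  else [::].

Lemma sizeE : size E = q.
Proof. by rewrite cardE. Qed.

Lemma allv_size n : size (allv n) = (q ^ n)%N.
Proof.
elim: n => //= n IH; by rewrite size_allpairs IH sizeE expnS.
Qed.

Lemma allv_mem n v : v \in allv n -> size v = n.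
Proof.
elim: n v => [|n IH] v /=; first by rewrite inE => /eqP ->.
by case/allpairsP => -[x w] /= [_ /IH <- ->].
Qed.

Lemma allv_uniq n : uniq (allv n).
Proof.
elim: n => //= n IH; apply: allpairs_uniq => //; first exact: enum_uniq.
by move=> [x v] [y w] _ _ /= [-> ->].
Qed.

Lemma index_take_lt (x : F) k : x \in take k E -> (index x E < k)%N.
Proof.
move=> xk; rewrite -(cat_take_drop k E) index_cat xk.
have := xk; rewrite -index_mem size_take; case: ifP => h1 h2; lia.
Qed.

Lemma lexless_size al : all (fun b => b < q)%N al ->
  size (lexless al) = (\sum_(k < size al) nth 0%N al k * q ^ (size al - k.+1))%N.
Proof.
elim: al => [|a al IH] /=; first by rewrite big_ord0.
case/andP => aq alq.
rewrite big_ord_recl size_cat size_allpairs size_map IH // allv_size size_take sizeE.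
by rewrite subSS subn0 /= aq.
Qed.


Lemma lexless_mem_size al v : v \in lexless al -> size v = size al.
Proof.
elim: al v => [|a al IH] v //=; rewrite mem_cat => /orP[].
  by case/allpairsP => -[x w] /= [_ /allv_mem <- ->].
by case/mapP => w /IH <- ->.
Qed.

Lemma lexless_uniq al : all (fun b => b < q)%N al -> uniq (lexless al).
Proof.
elim: al => [|a al IH] //= /andP[aq alq].
rewrite cat_uniq allpairs_uniq ?take_uniq ?enum_uniq ?allv_uniq //=; last first.
  by move=> [x v] [y w] _ _ /= [-> ->].
rewrite map_inj_uniq ?IH ?andbT //; last by move=> v w [].
apply/hasP => -[z /mapP[w _ ->]] /allpairsP[[x v] /= [xa _ [ex _]]].
have := index_take_lt xa; rewrite -ex index_uniq ?ltnn // ?enum_uniq // sizeE //.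
Qed.

Lemma lexless_small al v b : all (fun b => b < q)%N al ->
  v \in lexless al -> size b = size al -> lexge b al ->
  exists2 k, (k < size al)%N & (index (nth (0:F)%R v k) E < nth 0 b k)%N.
Proof.
elim: al v b => [|a al IH] v b //= /andP[aq alq] vin; case: b => [|c b] //= [sb].
move: vin; rewrite mem_cat => /orP[].
  case/allpairsP => -[x w] /= [xa _ ->] h; exists 0%N => //=.
  have := index_take_lt xa; case/orP: h => [ac|/andP[/eqP ->] _] /= => // h; exact: ltn_trans h ac.
case/mapP => w wl -> /orP[ac|/andP[/eqP ca lb]].
  exists 0%N => //=; rewrite index_uniq ?enum_uniq ?sizeE //.
have [k kl kb] := IH w b alq wl sb lb.
by exists k.+1.
Qed.

Lemma proj_size n : size (proj n) = (\sum_(0 <= t < n) q ^ t)%N.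
Proof.
elim: n => [|n IH]; first by rewrite big_geq.
by rewrite /= size_cat !size_map IH allv_size big_nat_recr //= addnC.
Qed.

Lemma proj_mem n v : v \in proj n -> (size v = n) /\
  exists2 k, (k < n)%N & (nth 0 v k = 1 /\ forall l, (l < k)%N -> nth 0 v l = 0).
Proof.
elim: n v => [|n IH] v //=; rewrite mem_cat => /orP[] /mapP[w].
  by move=> /allv_mem sw ->; split; [rewrite /= sw | exists 0%N].
move=> /IH [sw [k kn [k1 k0]]] ->; split; first by rewrite /= sw.
exists k.+1 => //; split => // -[|l] //= lk; exact: k0.
Qed.

Lemma proj_uniq n : uniq (proj n).
Proof.
elim: n => //= n IH; rewrite cat_uniq !map_inj_uniq ?allv_uniq ?IH //=;
  try by move=> ? ? [].
rewrite andbT; apply/hasP => -[z /mapP[w _ ->]] /mapP[u _ [/eqP]]; by rewrite eq_sym oner_eq0.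
Qed.

End Points.
Section Polys.
Variables (F : finFieldType) (m : nat).
Local Notation E := (enum F).
Local Notation q := #|F|.
Local Notation P := {mpoly F[m.+1]}.

Definition var (k : nat) : 'I_m.+1 := inord k.

Definition mono (d a : nat) (t : seq nat) : 'X_{1..m.+1} :=
  [multinom (if (k < a.-1)%N then 0%N else if (k == a.-1 :> nat) then (d - sumn t)%N
             else nth 0%N t (k - a)) | k < m.+1].

Lemma sum_nth t : (\sum_(0 <= k < size t) nth 0 t k)%N = sumn t.
Proof.
elim: t => [|x t IH]; first by rewrite big_geq.
by rewrite /= big_nat_recl //= -IH.
Qed.

Lemma mono_deg d a t : (1 <= a <= m.+1)%N -> size t = (m.+1 - a)%N ->
  (sumn t <= d)%N -> mdeg (mono d a t) = d.
Proof.
move=> /andP[a1 am] st sd; rewrite mdegE.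
under eq_bigr => k _ do rewrite mnmE.
rewrite -(big_mkord xpredT (fun k => if (k < a.-1)%N then 0%N else if (k == a.-1) then (d - sumn t)%N
             else nth 0%N t (k - a))).
rewrite (big_cat_nat _ (n := a.-1)) //=; last by lia.
rewrite big1_seq /=; last first.
  by move=> k; rewrite mem_index_iota => /andP[_ ->].
rewrite add0n big_ltn; last by lia.
rewrite ltnn eqxx prednK // -{1}(add0n a) big_addn.
rewrite -st (big_nat_cond) /=.
rewrite (eq_bigr (fun k => nth 0%N t k)); last first.
  move=> k _; rewrite addnK ifF; last by lia.
  by rewrite ifF //; lia.
rewrite -big_nat_cond sum_nth; lia.
Qed.


Lemma mono_at d a t (u : 'I_m.+1) : mono d a t u =
  if (u < a.-1)%N then 0%N else if (u == a.-1 :> nat) then (d - sumn t)%N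
  else nth 0%N t (u - a).
Proof. by rewrite mnmE. Qed.

Lemma mono_neq d a a' t t' : (0 < a)%N -> (a < a')%N -> (a' <= m.+1)%N ->
  (sumn t < d)%N -> mono d a t != mono d a' t'.
Proof.
move=> a0 aa a'm sd; apply/eqP => /mnmP /(_ (var a.-1)).
rewrite !mono_at /var inordK; last by lia.
rewrite ltnn eqxx ifT; lia.
Qed.

Lemma mono_inj d a a' t t' : (0 < a <= m.+1)%N -> (0 < a' <= m.+1)%N ->
  size t = (m.+1 - a)%N -> size t' = (m.+1 - a')%N ->
  (sumn t < d)%N -> (sumn t' < d)%N -> mono d a t = mono d a' t' -> a = a' /\ t = t'.
Proof.
move=> /andP[a0 am] /andP[a0' am'] st st' sd sd' e.
case: (ltngtP a a') => [aa|aa|aa].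
- by move: (mono_neq t' a0 aa am' sd); rewrite e eqxx.
- by move: (mono_neq t a0' aa am sd'); rewrite e eqxx.
subst a'; split => //; apply: (@eq_from_nth _ 0%N); first by rewrite st st'.
move=> k kt; move/mnmP: e => /(_ (var (a + k))); rewrite !mono_at /var inordK; last by lia.
by rewrite ifF ?ifF ?addKn //; lia.
Qed.

Lemma mono_eval0 (x : 'I_m.+1 -> F) d a t : (0 < a <= m.+1)%N -> (sumn t < d)%N ->
  x (var a.-1) = 0 -> ('X_[mono d a t] : P).@[x] = 0.
Proof.
move=> /andP[a0 am] sd x0; rewrite mevalX (bigD1 (var a.-1)) //= x0 mono_at /var inordK; last by lia.
rewrite ltnn eqxx expr0n /= (_ : (d - sumn t == 0)%N = false) ?mul0r //; lia.
Qed.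

Lemma mono_homog d a t : (1 <= a <= m.+1)%N -> size t = (m.+1 - a)%N ->
  (sumn t <= d)%N -> ('X_[mono d a t] : P) \is d.-homog.
Proof. by move=> h1 h2 h3; rewrite dhomogX; apply/eqP; exact: mono_deg. Qed.

Definition G (d i : nat) (b : seq nat) : P :=
  'X_(var i) ^+ (d - sumn b) *
  \prod_(k < size b) \prod_(l < nth 0%N b k)
     ('X_(var (i.+1 + k)) - (nth 0 E l)%:MP * 'X_(var i)).

Lemma G_eval (x : 'I_m.+1 -> F) d i b : (G d i b).@[x] =
  x (var i) ^+ (d - sumn b) *
  \prod_(k < size b) \prod_(l < nth 0%N b k) (x (var (i.+1 + k)) - nth 0 E l * x (var i)).
Proof.
rewrite /G mevalM rmorphXn /= mevalXU rmorph_prod /=; congr (_ * _).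
apply: eq_bigr => k _; rewrite rmorph_prod; apply: eq_bigr => l _.
by rewrite rmorphB rmorphM /= mevalC !mevalXU.
Qed.

Lemma homog_prod_ord N (p : 'I_N -> P) (e : 'I_N -> nat) :
  (forall k, p k \is (e k).-homog) -> \prod_(k < N) p k \is (\sum_(k < N) e k)%N.-homog.
Proof.
elim: N p e => [|N IH] p e h; first by rewrite !big_ord0 dhomog1.
rewrite big_ord_recr big_ord_recr /=; apply: dhomogM => //; exact: IH.
Qed.

Lemma X_homog (u : 'I_m.+1) : ('X_u : P) \is 1.-homog.
Proof. by rewrite dhomogX; apply/eqP; exact: mdeg1. Qed.

Lemma G_homog d i b : (sumn b <= d)%N -> G d i b \is d.-homog.
Proof.
move=> sd.
have e : ((1 * (d - sumn b)) + \sum_(k < size b) \sum_(l < nth 0%N b k) 1)%N = d.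
  under eq_bigr => k _ do rewrite sum1_card card_ord.
  rewrite -(big_mkord xpredT (fun k => nth 0%N b k)) sum_nth; lia.
rewrite -{2}e; apply: dhomogM; first by apply: dhomogMn; exact: X_homog.
apply: homog_prod_ord => k; apply: homog_prod_ord => l.
rewrite mul_mpolyC; apply: rpredB; first exact: X_homog.
by apply: rpredZ; exact: X_homog.
Qed.


Lemma tri_indep r (Q : 'I_r -> P) (phi : 'I_r -> P -> F) (w : 'I_r -> nat) :
  (forall t (c : 'I_r -> F), phi t (\sum_(s < r) c s *: Q s) = \sum_(s < r) c s * phi t (Q s)) ->
  (forall t, phi t (Q t) != 0) ->
  (forall t s, s != t -> (w t <= w s)%N -> phi t (Q s) = 0) ->
  lin_indep Q.
Proof.
move=> lin nz tri c sum0 t0; apply/eqP; apply: contraT => ct0.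
case: (@arg_minnP _ t0 (fun t => c t != 0) w ct0) => t ct tmin.
have phi0 : phi t 0 = 0.
  have := lin t (fun _ => 0); rewrite big1; last by move=> s _; rewrite scale0r.
  by move=> ->; rewrite big1 // => s _; rewrite mul0r.
have := lin t c; rewrite sum0 phi0 (bigD1 t) //= big1 ?addr0.
  by move/esym/eqP; rewrite mulf_eq0 (negPf ct) (negPf (nz t)).
move=> s st; case: (eqVneq (c s) 0) => [->|cs]; first by rewrite mul0r.
by rewrite tri ?mulr0 // tmin.
Qed.

End Polys.

Lemma sumn_diff (x y : seq nat) : size x = size y -> x != y -> (sumn y <= sumn x)%N ->
  exists2 k, (k < size x)%N & (nth 0%N y k < nth 0%N x k)%N.
Proof.
elim: x y => [|a x IH] [|b y] //= [sxy] nxy syx.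
case: (ltngtP b a) => [ba|ab|ab]; first by exists 0%N.
- have h1 : x != y by apply/eqP => exy; move: syx; rewrite exy; lia.
  have h2 : (sumn y <= sumn x)%N by lia.
  by have [k kx ky] := IH y sxy h1 h2; exists k.+1.
- subst b; have h1 : x != y by apply/eqP => exy; move: nxy; rewrite exy eqxx.
  have h2 : (sumn y <= sumn x)%N by lia.
  by have [k kx ky] := IH y sxy h1 h2; exists k.+1.
Qed.

Section Main.
Variables (F : finFieldType) (m d i j : nat).
Hypotheses (d0 : (0 < d)%N) (dq : (d <= #|F|)%N) (im : (i <= m)%N)
  (jS : (j < 'C(m - i + (d - 1), d - 1))%N).
Local Notation q := (qF F).
Local Notation n := (m - i)%N.
Local Notation E := (enum F).
Local Notation Pm := {mpoly F[m.+1]}.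

Lemma qE : q = #|F|. Proof. by []. Qed.

Definition S := sort lexge (tuples q n (d - 1)).
Definition B := take j S.
Definition alpha := nth [::] S j.-1.
Definition L1 : seq 'X_{1..m.+1} :=
  [seq mono m d a t | a <- iota 1 i, t <- tuples q (m.+1 - a) (d - 1)].
Definition L : seq Pm := [seq 'X_[mu] | mu <- L1] ++ [seq G F m d i b | b <- B].
Definition aff := if j is 0 then allv F n else lexless F alpha.
Definition Z := [seq nseq i 0 ++ 1 :: v | v <- aff] ++ [seq nseq i 0 ++ 0 :: v | v <- proj F n].
Definition pt (v : seq F) : {ffun 'I_m.+1 -> F} := [ffun k : 'I_m.+1 => nth 0 v k].

Lemma dq1 : (d - 1 < q)%N. Proof. rewrite qE; lia. Qed.

Lemma size_S : size S = 'C(n + (d - 1), d - 1).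
Proof. by rewrite size_sort size_tuples // dq1. Qed.

Lemma size_B : size B = j.
Proof. by rewrite size_take size_S jS. Qed.

Lemma S_mem b : b \in S -> [/\ size b = n, all (fun x => x < q)%N b & (sumn b <= d - 1)%N].
Proof. by rewrite mem_sort => /tuples_mem. Qed.

Lemma B_mem b : b \in B -> [/\ size b = n, all (fun x => x < q)%N b & (sumn b <= d - 1)%N].
Proof. by move/mem_take/S_mem. Qed.

Lemma uniq_B : uniq B.
Proof. by rewrite take_uniq // sort_uniq tuples_uniq. Qed.

Lemma alpha_mem : (0 < j)%N -> alpha \in S.
Proof. move=> j0; rewrite /alpha mem_nth // size_S; lia. Qed.

Lemma B_ge b : (0 < j)%N -> b \in B -> lexge b alpha.
Proof.
move=> j0 bB.
have bi : b = nth [::] S (index b B).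
  by rewrite -(nth_take _ (n0 := j)) ?nth_index // -size_B index_mem.
have ib : (index b B < j)%N by rewrite -size_B index_mem.
rewrite bi /alpha; apply: (@sorted_leq_nth_in _ [pred s : seq nat | size s == n]).
all: try by move=> *; apply: lexge_refl.
- move=> y x z; rewrite !inE => /eqP s1 /eqP s2 /eqP s3 h1 h2.
  by apply: (@lexge_trans_sz x y z) => //; congruence.
- by apply/allP => x /S_mem [sx _ _]; rewrite inE sx.
- exact/sort_sorted/lexge_total.
- by rewrite inE size_S; lia.
- by rewrite inE size_S; lia.
- lia.
Qed.


Lemma L1_mem mu : mu \in L1 -> exists a, exists t,
  [/\ (0 < a <= i)%N, t \in tuples q (m.+1 - a) (d - 1) & mu = mono m d a t].
Proof.
case/allpairsPdep => a [t [ai tt ->]]; exists a, t; split => //.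
by move: ai; rewrite mem_iota; lia.
Qed.

Lemma uniq_L1 : uniq L1.
Proof.
apply: uniq_flatten_map; first exact: iota_uniq.
  move=> a; rewrite mem_iota => ai; rewrite map_inj_in_uniq ?tuples_uniq //.
  move=> t t' /tuples_mem [st _ sd] /tuples_mem [st' _ sd'] e.
  have [] := mono_inj _ _ st st' _ _ e => //; lia.
move=> a a' z; rewrite !mem_iota => ai a'i /mapP[t /tuples_mem [st _ sd] ->].
case/mapP => t' /tuples_mem [st' _ sd'] e.
have [] := mono_inj _ _ st st' _ _ e => //; lia.
Qed.

Lemma size_L1 : size L1 = (\sum_(1 <= a < i.+1) 'C(m + d - a, d - 1))%N.
Proof.
rewrite size_allpairs_dep sumnE big_map /index_iota subSS subn0 /=.
apply: eq_big_seq => a; rewrite mem_iota => ai.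
rewrite size_tuples ?dq1 //; congr 'C(_, _); lia.
Qed.

Lemma size_L : size L = (j + \sum_(1 <= a < i.+1) 'C(m + d - a, d - 1))%N.
Proof. by rewrite size_cat !size_map size_B size_L1 addnC. Qed.

Lemma nth_L1 t : (t < size L1)%N -> nth 0 L t = 'X_[nth 0%MM L1 t].
Proof. by move=> tl; rewrite nth_cat size_map tl (nth_map 0%MM). Qed.

Lemma nth_L2 t : (size L1 <= t)%N -> (t < size L)%N ->
  nth 0 L t = G F m d i (nth [::] B (t - size L1)).
Proof.
move=> t1 t2; rewrite nth_cat size_map ltnNge t1 /= (nth_map [::]) //.
by move: t2; rewrite size_cat !size_map; lia.
Qed.

Lemma pt_var v u : (u <= m)%N -> pt v (var m u) = nth 0 v u.
Proof. by move=> um; rewrite ffunE /var inordK. Qed.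

Lemma nth_pre (c : F) w u : nth 0 (nseq i 0 ++ c :: w) u =
  if (u < i)%N then 0 else if u == i then c else nth 0 w (u - i.+1).
Proof.
rewrite nth_cat size_nseq; case: ltnP => ui; first by rewrite nth_nseq ui.
case: eqP => [->|ne]; first by rewrite subnn.
by have -> : (u - i = (u - i.+1).+1)%N by lia.
Qed.

Lemma G_pt (c : F) w b : size b = n -> (G F m d i b).@[pt (nseq i 0 ++ c :: w)] =
  c ^+ (d - sumn b) * \prod_(k < size b) \prod_(l < nth 0%N b k) (nth 0 w k - nth 0 E l * c).
Proof.
move=> sb; rewrite G_eval pt_var // nth_pre ltnn eqxx; congr (_ * _).
apply: eq_bigr => k _; apply: eq_bigr => l _.
have kn := ltn_ord k; rewrite pt_var; last by lia.
rewrite nth_pre ifF; last by lia.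
by rewrite ifF ?addKn //; lia.
Qed.

Lemma L1_pt0 mu (c : F) w : mu \in L1 -> ('X_[mu] : Pm).@[pt (nseq i 0 ++ c :: w)] = 0.
Proof.
case/L1_mem => a [t [ai /tuples_mem [_ _ sd] ->]].
apply: mono_eval0; [lia | lia | ].
rewrite pt_var ?nth_pre ?ifT //; lia.
Qed.


Lemma G_pt1_zero w b : size b = n ->
  (exists2 k, (k < size b)%N & exists2 l, (l < nth 0%N b k)%N & nth 0 w k = nth 0 E l) ->
  (G F m d i b).@[pt (nseq i 0 ++ 1 :: w)] = 0.
Proof.
move=> sb [k kb [l lb e]]; rewrite G_pt // expr1n mul1r; apply/eqP/prodf_eq0.
exists (Ordinal kb) => //; apply/prodf_eq0; exists (Ordinal lb) => //=.
by rewrite e mulr1 subrr.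
Qed.

Lemma G_pt0_zero w b : size b = n -> (sumn b <= d - 1)%N ->
  (G F m d i b).@[pt (nseq i 0 ++ 0 :: w)] = 0.
Proof.
move=> sb sd; rewrite G_pt // expr0n (_ : (d - sumn b == 0)%N = false) ?mul0r //; lia.
Qed.

Lemma G_pt_nz b : b \in B ->
  (G F m d i b).@[pt (nseq i 0 ++ 1 :: map (nth 0 E) b)] != 0.
Proof.
case/B_mem => sb /allP bq _; rewrite G_pt // expr1n mul1r; apply/prodf_neq0 => k _.
apply/prodf_neq0 => l _; rewrite mulr1 (nth_map 0%N) // subr_eq0.
have kq : (nth 0%N b k < #|F|)%N by apply: bq; rewrite mem_nth.
rewrite nth_uniq ?enum_uniq ?sizeE //; last by apply: ltn_trans kq.
by rewrite neq_ltn ltn_ord orbT.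
Qed.

Definition Q (t : 'I_(size L)) : Pm := nth 0 L t.

Lemma L_homog p : p \in L -> p \is d.-homog.
Proof.
rewrite mem_cat => /orP[] /mapP[x xin ->].
  case/L1_mem: xin => a [t [ai /tuples_mem [st _ sd] ->]].
  by apply: mono_homog => //; lia.
by case/B_mem: xin => _ _ sd; apply: G_homog; lia.
Qed.

Lemma Q_adm : admissible d Q.
Proof.
split; first by move=> t; apply: L_homog; rewrite mem_nth.
pose s1 := size L1.
pose pB (t : 'I_(size L)) := nth [::] B (t - s1).
pose phi (t : 'I_(size L)) : Pm -> F := if (t < s1)%N then (fun p => p@_(nth 0%MM L1 t))
  else (fun p => p.@[pt (nseq i 0 ++ 1 :: map (nth 0 E) (pB t))]).
pose w (t : 'I_(size L)) := if (t < s1)%N then d else sumn (pB t).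
have pBmem (t : 'I_(size L)) : (s1 <= t)%N -> pB t \in B.
  move=> ts; rewrite mem_nth // size_B; have := ltn_ord t; rewrite {2}size_L -/s1; have := size_L1; rewrite -/s1; lia.
apply: (@tri_indep F m _ Q phi w).
- move=> t c; rewrite /phi; case: ifP => _.
    by rewrite raddf_sum; apply: eq_bigr => s _; exact: mcoeffZ.
  have -> := raddf_sum (meval (pt (nseq i 0 ++ 1 :: [seq (enum F)`_i | i <- pB t]))).
  by apply: eq_bigr => s _; exact: mevalZ.
- move=> t; rewrite /phi /Q; case: ifP => ts.
    by rewrite nth_L1 // mcoeffX eqxx oner_eq0.
  by rewrite nth_L2 ?ltn_ord //; [apply: G_pt_nz; apply: pBmem | ]; lia.
- move=> t s st; rewrite /w /phi /Q; case: ifP => ts; case: ifP => ss.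
  + move=> _; rewrite nth_L1 // mcoeffX nth_uniq ?uniq_L1 //.
    by rewrite val_eqE (negPf st).
  + have := pBmem s; case/(_ _)/B_mem => [|_ _ sd]; first lia.
    lia.
  + by move=> _; rewrite nth_L1 // L1_pt0 // mem_nth.
  + move=> wts; have s1s : (size L1 <= s)%N by rewrite leqNgt ss.
    rewrite nth_L2 ?ltn_ord //.
    have sB : pB s \in B by apply: pBmem; rewrite leqNgt ss.
    have tB : pB t \in B by apply: pBmem; rewrite leqNgt ts.
    have [sbs _ sds] := B_mem sB; have [sbt btq sdt] := B_mem tB.
    have sL := ltn_ord s; have tL := ltn_ord t.
    have := size_L; rewrite -size_L1 -/s1 => sLe.
    have ne : pB s != pB t.
      rewrite /pB nth_uniq ?uniq_B ?size_B; try lia.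
      by apply: contra st; rewrite -val_eqE /=; lia.
    have [k ks kl] := @sumn_diff (pB s) (pB t) (etrans sbs (esym sbt)) ne wts.
    apply: G_pt1_zero => //; exists k => //; exists (nth 0%N (pB t) k) => //.
    by rewrite (nth_map 0%N) //; rewrite sbt -sbs.
Qed.


Lemma alpha_props : (0 < j)%N -> size alpha = n /\ all (fun x => x < #|F|)%N alpha.
Proof. by move=> j0; have [? ? _] := S_mem (alpha_mem j0). Qed.

Lemma aff_size w : w \in aff -> size w = n.
Proof.
rewrite /aff; case: j alpha_props => [_|j'] /=; first exact: allv_mem.
by move=> /(_ isT) [sa _] /lexless_mem_size ->.
Qed.

Lemma aff_uniq : uniq aff.
Proof.
rewrite /aff; case: j alpha_props => [_|j'] /=; first exact: allv_uniq.
by move=> /(_ isT) [_ aq]; exact: lexless_uniq.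
Qed.

Lemma aff_eq : (0 < j)%N -> aff = lexless F alpha.
Proof. by rewrite /aff /alpha; case: (j). Qed.

Lemma L_zero1 p w : p \in L -> w \in aff -> p.@[pt (nseq i 0 ++ 1 :: w)] = 0.
Proof.
rewrite mem_cat => /orP[] /mapP[x xin ->] waff; first exact: L1_pt0.
have j0 : (0 < j)%N by rewrite -size_B; case: (B) xin.
have [sx xq sdx] := B_mem xin.
have [sa aq] := alpha_props j0.
move: waff; rewrite aff_eq // => waff.
have [k ka kx] := lexless_small aq waff (etrans sx (esym sa)) (B_ge j0 xin).
apply: G_pt1_zero => //; exists k; first by rewrite sx -sa.
exists (index (nth 0 w k) (enum F)) => //.
by rewrite nth_index // mem_enum.
Qed.

Lemma L_zero0 p w : p \in L -> p.@[pt (nseq i 0 ++ 0 :: w)] = 0.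
Proof.
rewrite mem_cat => /orP[] /mapP[x xin ->]; first exact: L1_pt0.
by have [sx _ sdx] := B_mem xin; apply: G_pt0_zero.
Qed.

Lemma pre_inj (c : F) : injective (fun w => nseq i 0 ++ c :: w).
Proof.
by move=> w w' /eqP; rewrite eqseq_cat ?size_nseq // => /andP[_ /eqP [->]].
Qed.

Lemma uniq_Z : uniq Z.
Proof.
rewrite cat_uniq !map_inj_uniq ?aff_uniq ?proj_uniq ?andbT //; try exact: pre_inj.
apply/hasP => -[z /mapP[w _ ->]] /mapP[u _] /(congr1 (nth 0 ^~ i)).
by rewrite !nth_pre ltnn eqxx => /eqP; rewrite eq_sym oner_eq0.
Qed.

Lemma size_Z : size Z = (size aff + size (proj F n))%N.
Proof. by rewrite size_cat !size_map. Qed.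

Lemma Z_size v : v \in Z -> size v = m.+1.
Proof.
rewrite mem_cat => /orP[] /mapP[w wz ->]; rewrite size_cat size_nseq /=.
  by rewrite aff_size //; lia.
by have [-> _] := proj_mem wz; lia.
Qed.

Lemma Z_norm v : v \in Z -> normalized (pt v).
Proof.
rewrite mem_cat => /orP[] /mapP[w wz ->]; apply/existsP.
  have ii : (i < m.+1)%N by lia.
  exists (Ordinal ii); rewrite ffunE /= nth_pre ltnn eqxx eqxx /=.
  by apply/forallP => l; apply/implyP => li; rewrite ffunE nth_pre li.
have [sw [k kn [k1 k0]]] := proj_mem wz.
have ki : (i.+1 + k < m.+1)%N by lia.
exists (Ordinal ki); rewrite ffunE /= nth_pre ifF; last by lia.
rewrite ifF; last by lia.
rewrite addKn k1 eqxx /=.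
apply/forallP => l; apply/implyP => li; rewrite ffunE nth_pre.
case: ifP => // h1; case: ifP => // h2; rewrite k0 //; move/negbT: h1; move/negbT: h2; lia.
Qed.

Lemma Z_zero v p : v \in Z -> p \in L -> p.@[pt v] = 0.
Proof.
rewrite mem_cat => /orP[] /mapP[w wz ->] pL; first exact: L_zero1.
exact: L_zero0.
Qed.

Lemma pt_inj : {in Z &, injective pt}.
Proof.
move=> v v' /Z_size sv /Z_size sv' e; apply: (@eq_from_nth _ 0); first by rewrite sv sv'.
move=> k; rewrite sv => km.
have := congr1 (fun f : {ffun 'I_m.+1 -> F} => f (Ordinal km)) e; by rewrite /= !ffunE.
Qed.

Lemma nzeros_ge : (size Z <= nzeros Q)%N.
Proof.
rewrite -(size_map pt) -(card_uniqP _); last by rewrite map_inj_in_uniq ?uniq_Z //; exact: pt_inj.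
rewrite /nzeros; apply: subset_leq_card; apply/subsetP => x /mapP[v vZ ->].
rewrite inE Z_norm //=; apply/forallP => t; apply/eqP; apply: Z_zero => //.
by rewrite /Q mem_nth.
Qed.


Lemma size_aff : size aff = Hs q j (d - 1) n.
Proof.
case: (posnP j) => [j0|j0].
  by rewrite /aff /Hs j0 allv_size.
have [sa aq] := alpha_props j0.
rewrite aff_eq // lexless_size // sa /Hs -(prednK j0) /=.
by [].
Qed.

Lemma size_proj_pq : size (proj F n) = pq F (m%:Z - i%:Z - 1).
Proof.
case en : n => [|n'].
  have -> : (m%:Z - i%:Z - 1 = Negz 0)%R by rewrite NegzE; lia.
  by [].
have -> : (m%:Z - i%:Z - 1 = Posz n')%R by lia.
by rewrite proj_size.
Qed.

Lemma main_bound : (Hs q j (d - 1) n + pq F (m%:Z - i%:Z - 1) <= e_rdm F (size L) d m)%N.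
Proof.
rewrite -size_aff -size_proj_pq -size_Z.
apply: leq_trans nzeros_ge _.
have lt : (nzeros Q < #|{ffun 'I_m.+1 -> F}|.+1)%N.
  by rewrite ltnS /nzeros max_card.
rewrite /e_rdm; apply: (@leq_bigmax_cond _ _ (fun k : 'I_ _ => (k : nat)) (Ordinal lt)).
rewrite /pdec; case: excluded_middle_informative => // [[]].
by exists Q; split => //; exact: Q_adm.
Qed.

End Main.

Theorem theorem5p10 (F : finFieldType) (m d r i j : nat) :
  (0 < m)%N -> (0 < d)%N -> (0 < r)%N ->
  (d <= qF F)%N -> (r <= 'C(m + d, d))%N ->
  ((r < 'C(m + d, d))%N ->
     [/\ r = (j + \sum_(1 <= a < i.+1) 'C(m + d - a, d - 1))%N,
         (i <= m)%N & (j < 'C(m + d - i - 1, d - 1))%N]) ->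
  (r = 'C(m + d, d) -> i = m /\ j = 1%N) ->
  (Hs (qF F) j (d - 1) (m - i) + pq F (m%:Z - i%:Z - 1)%R <= e_rdm F r d m)%N.
Proof.
move=> m0 d0 r0 dq rC h1 h2.
case: (ltngtP r 'C(m + d, d)) rC => // [rlt|req] _; last first.
  have [-> ->] := h2 req.
  rewrite subnn; have -> : (m%:Z - m%:Z - 1 = Negz 0)%R by rewrite NegzE; lia.
  by rewrite /Hs /= big_ord0.
have [er im jS] := h1 rlt.
have jS' : (j < 'C(m - i + (d - 1), d - 1))%N.
  by move: jS; have -> : (m + d - i - 1 = m - i + (d - 1))%N by lia.
have := @main_bound F m d i j d0 dq im jS'.
rewrite size_L // => h. subst r. exact: h.
Qed.
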